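(* For every multigraph $G$ and every family $\mathcal{F}$ of multigraphs, $\mathrm{wsat}(G,\mathcal{F})\geq\mathrm{rk}\text{-}\mathrm{sat}(G,\mathcal{F})$.
   Context: A multigraph on vertex set $V$ has as edge set a multiset of pairs from $\binom{V}{2}$; different instances of the same pair are treated as distinct elements. For a multigraph $G$ and a family $\mathcal{F}$ of multigraphs, a spanning submultigraph $H$ of $G$ is weakly $\mathcal{F}$-saturated in $G$ if $G$ can be obtained from $H$ by adding the missing edge instances one at a time so that each added edge instance belongs to a copy (in the current multigraph) of some $F\in\mathcal{F}$. $\mathrm{wsat}(G,\mathcal{F})$ is the minimum number of edges (counted with multiplicity) of a weakly $\mathcal{F}$-saturated submultigraph of $G$. A matroid $M$ on the ground set $E(G)$ (edge instances) is weakly $\mathcal{F}$-saturated if for every $F\in\mathcal{F}$, every copy $\tilde F$ of $F$ in $G$ is a cycle of $M$, i.e. $\mathrm{rk}_M(E(\tilde F)\setminus\{e\})=\mathrm{rk}_M(E(\tilde F))$ for all $e\in E(\tilde F)$. $\mathrm{rk}\text{-}\mathrm{sat}(G,\mathcal{F})$ is the maximum rank of a weakly $\mathcal{F}$-saturated matroid on $E(G)$. *)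

(* Defs.v *)
From mathcomp Require Import all_boot.
From Stdlib Require Import ClassicalEpsilon.
Set Implicit Arguments.
Unset Strict Implicit.
Unset Printing Implicit Defensive.

(* Parallel edge instances are
   distinct elements of [me]. *)
Record multigraph := Multigraph {
  mv : finType;
  me : finType;
  mends : me -> {set mv};
  mends2 : forall e, #|mends e| = 2
}.

Definition pb (P : Prop) : bool :=
  if excluded_middle_informative P then true else false.

Lemma pbP (P : Prop) : reflect P (pb P).
Proof. rewrite /pb; case: excluded_middle_informative => h; by constructor. Qed.

Definition is_copy (G F0 : multigraph) (S : {set me G})
    (phi : mv F0 -> mv G) (psi : me F0 -> me G) : Prop :=
  injective phi /\ injective psi /\ (forall f, psi f \in S) /\
  (forall f, mends (psi f) = phi @: mends f).

Definition in_copy (G : multigraph) (Fam : multigraph -> Prop)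
    (S : {set me G}) (x : me G) : Prop :=
  exists F0 : multigraph, Fam F0 /\
  exists (phi : mv F0 -> mv G) (psi : me F0 -> me G),
    is_copy S phi psi /\ x \in [set psi f | f in [set: me F0]].

Definition weakly_sat (G : multigraph) (Fam : multigraph -> Prop)
    (H : {set me G}) : Prop :=
  exists s : seq (me G),
    uniq s /\ (forall x, (x \in s) = (x \notin H)) /\
    forall (i : nat) (x0 : me G), i < size s ->
      in_copy Fam (H :|: [set x in take i.+1 s]) (nth x0 s i).

Lemma weakly_sat_full (G : multigraph) (Fam : multigraph -> Prop) :
  weakly_sat Fam [set: me G].
Proof.
exists [::]; split => //; split => [x|i x0 //].
by rewrite in_setT.
Qed.

Lemma wsat_ex (G : multigraph) (Fam : multigraph -> Prop) :
  exists n, pb (exists H : {set me G}, weakly_sat Fam H /\ #|H| = n).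
Proof.
exists #|[set: me G]|; apply/pbP; exists [set: me G]; split => //.
exact: weakly_sat_full.
Qed.

Definition wsat (G : multigraph) (Fam : multigraph -> Prop) : nat :=
  ex_minn (wsat_ex G Fam).

Definition is_matroid_rank (E : finType) (rk : {set E} -> nat) : Prop :=
  [/\ forall A : {set E}, rk A <= #|A|,
      forall A B : {set E}, A \subset B -> rk A <= rk B &
      forall A B : {set E}, rk (A :|: B) + rk (A :&: B) <= rk A + rk B].

Definition is_cycle (E : finType) (rk : {set E} -> nat) (C : {set E}) : Prop :=
  forall e, e \in C -> rk (C :\ e) = rk C.

Definition weakly_sat_matroid (G : multigraph) (Fam : multigraph -> Prop)
    (rk : {set me G} -> nat) : Prop :=
  is_matroid_rank rk /\
  forall F0 : multigraph, Fam F0 ->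
  forall (phi : mv F0 -> mv G) (psi : me F0 -> me G),
    is_copy [set: me G] phi psi ->
    is_cycle rk [set psi f | f in [set: me F0]].

Definition rksat_pred (G : multigraph) (Fam : multigraph -> Prop) : pred nat :=
  fun n => pb (exists rk : {set me G} -> nat,
                 weakly_sat_matroid Fam rk /\ rk [set: me G] = n).

Lemma rksat_ex (G : multigraph) (Fam : multigraph -> Prop) :
  exists n, rksat_pred G Fam n.
Proof.
exists 0; apply/pbP; exists (fun _ => 0); split; last by [].
split; first by split => *; rewrite ?leq0n.
by move=> F0 _ phi psi _ e _.
Qed.

Lemma rksat_bound (G : multigraph) (Fam : multigraph -> Prop) :
  forall n, rksat_pred G Fam n -> n <= #|[set: me G]|.
Proof.
move=> n /pbP [rk [[[h1 _ _] _] <-]]; exact: h1.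
Qed.

Definition rksat (G : multigraph) (Fam : multigraph -> Prop) : nat :=
  ex_maxn (rksat_ex G Fam) (rksat_bound (Fam := Fam)).

(* Main.v *)
Require Import Defs.
From mathcomp Require Import all_boot.

Lemma step (G : multigraph) (Fam : multigraph -> Prop) (rk : {set me G} -> nat)
  (S : {set me G}) (x : me G) :
  weakly_sat_matroid Fam rk -> in_copy Fam S x -> rk S <= rk (S :\ x).
Proof.
move=> [[h1 h2 h3] hc] [F0 [hF [phi [psi [[hi [hj [hS he]]] hx]]]]].
set C := [set psi f | f in [set: me F0]].
have hcyc : is_cycle rk C.
  by apply: (hc F0 hF phi psi); do 3 (split => //); move=> f; rewrite inE.
have CS : C \subset S by apply/subsetP => y /imsetP [f _ ->].
have := h3 (S :\ x) C.
have -> : (S :\ x) :|: C = S.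
  apply/setP => y; rewrite !inE; case: (boolP (y == x)) => [/eqP -> | _] /=.
    by rewrite hx (subsetP CS x hx).
  by case: (boolP (y \in S)) => //= yS; apply/negP => /(subsetP CS); rewrite (negbTE yS).
have -> : (S :\ x) :&: C = C :\ x.
  apply/setP => y; rewrite !inE; case: (y == x) => //=.
  by case: (boolP (y \in C)) => yC; rewrite ?andbT ?andbF // (subsetP CS y yC).
by rewrite (hcyc x hx) leq_add2r.
Qed.

Theorem lemma2 (G : multigraph) (Fam : multigraph -> Prop) :
  wsat G Fam >= rksat G Fam.
Proof.
rewrite /wsat /rksat.
case: ex_minnP => m /pbP [H [[s [us [hs hstep]]] hH]] _.
case: ex_maxnP => n /pbP [rk [hm hrk]] _.
have [[h1 h2 h3] _] := hm.
have claim : forall i, i <= size s -> rk (H :|: [set y in take i s]) <= rk H.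
  elim => [|i IH] hi.
    rewrite take0; have -> : [set y in [::]] = set0 :> {set me G}.
      by apply/setP => y; rewrite !inE.
    by rewrite setU0.
  have his : i < size s by [].
  have x0 : me G by move: his; case: (s) => [|a _] //; exact a.
  apply: leq_trans (IH (ltnW his)).
  set S := H :|: [set y in take i.+1 s].
  have hst := @step _ _ _ _ _ hm (hstep i x0 his).
  apply: leq_trans hst _.
  apply: h2; apply/subsetP => y; rewrite !inE (take_nth x0 his) -cats1 mem_cat inE.
  by case: (y == _); rewrite ?orbT ?orbF.
have := claim (size s) (leqnn _).
rewrite take_size.
have -> : H :|: [set y in s] = [set: me G].
  apply/setP => y; rewrite !inE hs; by case: (y \in H).
rewrite hrk -hH => hle; exact: leq_trans hle (h1 H).
Qed.
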